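(* Let $W\in\mathbb{R}^{d\times d}$ be symmetric positive semidefinite with $\mathrm{tr}(W)=1$, $\sum_{i,j}|W_{ij}|\le k$, and $\mathrm{rank}(W)=r$. Then $\sum_{i=1}^d\sqrt{W_{ii}}\le\sqrt{rk}$. *)

(* Defs.v *)
From mathcomp Require Import all_boot all_order all_algebra.
From mathcomp Require Import reals.
Set Implicit Arguments. Unset Strict Implicit. Unset Printing Implicit Defensive.
Import Order.TTheory GRing.Theory Num.Theory.
Local Open Scope ring_scope.

Definition psd {R : realType} {d : nat} (W : 'M[R]_d) : Prop :=
  W^T = W /\ forall x : 'cV[R]_d, 0 <= (x^T *m W *m x) ord0 ord0.

(* Main.v *)
Require Import Defs.
From mathcomp Require Import all_boot all_order all_algebra.
From mathcomp Require Import reals.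
From mathcomp Require Import ring lra.
Import Order.TTheory GRing.Theory Num.Theory.
Local Open Scope ring_scope.

Lemma cs (R : realFieldType) (I : finType) (x y : I -> R) :
  (\sum_i x i * y i)^+2 <= (\sum_i x i ^+ 2) * (\sum_i y i ^+ 2).
Proof.
set A := \sum_i x i ^+ 2; set B := \sum_i x i * y i; set C := \sum_i y i ^+ 2.
have H : 0 <= \sum_i \sum_j (x i * y j - x j * y i)^+2.
  by apply: sumr_ge0 => i _; apply: sumr_ge0 => j _; exact: sqr_ge0.
have E1 : forall i, \sum_j (x i * y j - x j * y i)^+2 =
     x i ^+ 2 * C + y i ^+ 2 * A - 2 * (x i * y i) * B.
  move=> i; rewrite /A /B /C !mulr_sumr -!sumrN -!big_split /=.
  by apply: eq_bigr => j _; ring.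
have E : \sum_i \sum_j (x i * y j - x j * y i)^+2 = 2 * (A * C - B ^+ 2).
  under eq_bigr do rewrite E1.
  rewrite sumrB !big_split /= -!mulr_suml.
  rewrite -/A -/C -[\sum_i 2 * _]mulr_sumr -/B; ring.
rewrite E in H; move: H; rewrite pmulr_rge0 // subr_ge0 //.
Qed.

Lemma rv_sq0 (R : realFieldType) n (w : 'rV[R]_n) : (w *m w^T) ord0 ord0 = 0 -> w = 0.
Proof.
rewrite mxE => H.
have H2 : forall j, true -> w ord0 j * w^T j ord0 = 0.
  apply/psumr_eq0P => // j _; rewrite mxE; exact: sqr_ge0.
apply/rowP => j; rewrite mxE; have := H2 j isT; rewrite mxE.
by move/eqP; rewrite mulf_eq0 orbb => /eqP.
Qed.

Lemma proj_gen (R : realFieldType) d r (A : 'M[R]_d) (Bm : 'M[R]_(r, d)) :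
  row_free Bm -> (A <= Bm)%MS ->
  exists P : 'M[R]_d,
    [/\ P^T = P, P *m P = P, A *m P = A & \tr P = r%:R].
Proof.
move=> Bfree AB.
pose G := Bm *m Bm^T.
have Gu : G \in unitmx.
  rewrite -row_free_unit; apply: inj_row_free => v vG.
  have : (v *m Bm) *m (v *m Bm)^T = 0.
    by rewrite trmx_mul mulmxA -(mulmxA v) -/G vG mul0mx.
  move=> H; apply/eqP; rewrite -(mulmx_free_eq0 _ Bfree).
  by apply/eqP; apply: rv_sq0; rewrite H mxE.
have GT : G^T = G by rewrite /G trmx_mul trmxK.
exists (Bm^T *m invmx G *m Bm); split.
- by rewrite !trmx_mul trmxK trmx_inv GT mulmxA.
- by rewrite -!mulmxA (mulmxA Bm) -/G (mulmxA (invmx G)) mulVmx // mul1mx.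
- case/submxP: AB => D ->.
  by rewrite -!mulmxA (mulmxA Bm) -/G (mulmxA G) mulmxV // mul1mx.
- by rewrite mxtrace_mulC mulmxA -/G mulmxV // mxtrace1.
Qed.

Lemma proj_exists (R : realFieldType) d (A : 'M[R]_d) :
  exists P : 'M[R]_d,
    [/\ P^T = P, P *m P = P, A *m P = A & \tr P = (\rank A)%:R].
Proof. apply: proj_gen; [exact: row_base_free | by rewrite eq_row_base]. Qed.

Lemma quad2 (R : realFieldType) d (W : 'M[R]_d) i j (u v : R) :
  let x := u *: delta_mx i (ord0 : 'I_1) + v *: delta_mx j ord0 in
  (x^T *m W *m x) ord0 ord0 =
   u ^+ 2 * W i i + u * v * (W i j + W j i) + v ^+ 2 * W j j.
Proof.
move=> x.
have E : forall p q : 'I_d, ((delta_mx p (ord0 : 'I_1))^T *m W *m delta_mx q (ord0 : 'I_1)) ord0 ord0 = W p q.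
  move=> p q; rewrite trmx_delta.
  have -> : delta_mx (ord0 : 'I_1) p *m W = row p W by rewrite rowE.
  have -> : row p W *m delta_mx q (ord0 : 'I_1) = col q (row p W) by rewrite colE.
  by rewrite !mxE.
have E' : forall p q : 'I_d, ((delta_mx p (ord0 : 'I_1))^T *m W *m delta_mx q (ord0 : 'I_1)) = const_mx (W p q).
  by move=> p q; apply/matrixP => a b; rewrite (ord1 a) (ord1 b) E mxE.
rewrite /x !linearD /= !linearZ /= !mulmxDl -!scalemxAl ?mulmxDl -?scalemxAl.
rewrite !E' !mxE.
ring.
Qed.

Arguments quad2 {R d}.

Arguments proj_exists {R d}.

Lemma psd_off (R : realType) d (W : 'M[R]_d) i j :
  (forall x : 'cV[R]_d, 0 <= (x^T *m W *m x) ord0 ord0) -> W^T = W ->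
  0 < Num.sqrt (W i i) * Num.sqrt (W j j) ->
  `|W i j| <= Num.sqrt (W i i) * Num.sqrt (W j j).
Proof.
move=> Hx WT Hp.
have Wkk : forall k, 0 <= W k k.
  move=> k; have := Hx (1 *: delta_mx k ord0 + 0 *: delta_mx k ord0).
  rewrite (quad2 W k k 1 0); lra.
have Wji : W j i = W i j by rewrite -{1}WT mxE.
set ai := Num.sqrt (W i i); set aj := Num.sqrt (W j j).
have Ei : W i i = ai ^+ 2 by rewrite sqr_sqrtr.
have Ej : W j j = aj ^+ 2 by rewrite sqr_sqrtr.
pose s : R := if 0 <= W i j then -1 else 1.
have hs : s * W i j = - `|W i j|.
  rewrite /s; case: ifP => h.
    by rewrite ger0_norm // mulN1r.
  by rewrite ltr0_norm ?opprK ?mul1r // ltNge h.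
have hs2 : s ^+ 2 = 1 by rewrite /s; case: ifP => _; rewrite ?sqrrN expr1n.
have := Hx (aj *: delta_mx i ord0 + (s * ai) *: delta_mx j ord0).
rewrite (quad2 W i j) Wji.
have -> : aj ^+ 2 * W i i + aj * (s * ai) * (W i j + W i j) + (s * ai) ^+ 2 * W j j
   = 2 * (ai * aj) * (ai * aj - `|W i j|).
  rewrite Ei Ej -hs; have -> : (s * ai) ^+ 2 = s ^+ 2 * ai ^+ 2 by rewrite exprMn.
  rewrite hs2; ring.
rewrite pmulr_rge0 ?subr_ge0 //.
by rewrite mulr_gt0.
Qed.

Lemma frob (R : realFieldType) d (A P : 'M[R]_d) : P^T = P -> P *m P = P -> A *m P = A ->
  (\tr A)^+2 <= \tr P * \sum_i \sum_j A i j ^+ 2.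
Proof.
move=> PT PP AP.
have trA : \tr A = \sum_i \sum_j A i j * P j i.
  by rewrite -{1}AP /mxtrace; apply: eq_bigr => i _; rewrite mxE.
have trP : \tr P = \sum_i \sum_j P j i ^+ 2.
  rewrite -{1}PP /mxtrace; apply: eq_bigr => i _; rewrite mxE; apply: eq_bigr => j _.
  by rewrite -{1}PT mxE expr2.
rewrite trA trP !pair_bigA /= mulrC.
exact: cs.
Qed.

Arguments frob {R d A P}.

Lemma psd_diag (R : realType) d (W : 'M[R]_d) k :
  (forall x : 'cV[R]_d, 0 <= (x^T *m W *m x) ord0 ord0) -> 0 <= W k k.
Proof.
move=> Hx; have := Hx (1 *: delta_mx k ord0 + 0 *: delta_mx k ord0).
rewrite (quad2 W k k 1 0); lra.
Qed.

Theorem proposition2 (R : realType) (d : nat) (W : 'M[R]_d) (k : R) (r : nat) :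
  psd W ->
  \tr W = 1 ->
  \sum_(i < d) \sum_(j < d) `|W i j| <= k ->
  \rank W = r ->
  \sum_(i < d) Num.sqrt (W i i) <= Num.sqrt (r%:R * k).
Proof.
move=> [WT Hx] _ Hk Hr.
pose a i := Num.sqrt (W i i).
pose c i := Num.sqrt (a i).
pose b := \row_i (c i)^-1.
pose A := diag_mx b *m W *m diag_mx b.
have Aij : forall i j, A i j = (c i)^-1 * W i j * (c j)^-1.
  by move=> i j; rewrite /A mul_mx_diag mxE mul_diag_mx !mxE.
have ha : forall i, a i = c i ^+ 2 by move=> i; rewrite sqr_sqrtr // sqrtr_ge0.
have hw : forall i, W i i = a i ^+ 2 by move=> i; rewrite sqr_sqrtr // psd_diag.
have [P [PT PP AP trP]] := proj_exists A.
have rA : (\rank A <= r)%N.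
  by rewrite -Hr; apply: leq_trans (mxrankM_maxl _ _) _; apply: mxrankM_maxr.
have trA : \tr A = \sum_i a i.
  apply: eq_bigr => i _; rewrite Aij hw ha.
  have [->|c0] := eqVneq (c i) 0; first by rewrite invr0 !mul0r expr0n.
  by field.
have Ssq : \sum_i \sum_j A i j ^+ 2 <= k.
  apply: le_trans Hk; apply: ler_sum => i _; apply: ler_sum => j _.
  rewrite Aij.
  have [->|ci0] := eqVneq (c i) 0; first by rewrite invr0 !mul0r expr0n /= normr_ge0.
  have [->|cj0] := eqVneq (c j) 0; first by rewrite invr0 !mulr0 expr0n /= normr_ge0.
  have cip : 0 < c i by rewrite lt_def ci0 sqrtr_ge0.
  have cjp : 0 < c j by rewrite lt_def cj0 sqrtr_ge0.
  have pp : 0 < a i * a j by rewrite ha ha mulr_gt0 // exprn_gt0.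
  have hW := psd_off _ _ _ _ _ Hx WT pp.
  have -> : (c i)^-1 * W i j * (c j)^-1 = W i j / (c i * c j) by rewrite invfM; ring.
  rewrite expr_div_n -real_normK ?num_real // exprMn -!ha.
  rewrite expr2 -mulrA; apply: ler_piMr => //.
  by rewrite ler_pdivrMr // mul1r.
have Sge0 : 0 <= \sum_i \sum_j A i j ^+ 2.
  by apply: sumr_ge0 => i _; apply: sumr_ge0 => j _; exact: sqr_ge0.
have key : (\sum_i a i) ^+ 2 <= r%:R * k.
  rewrite -trA; apply: le_trans (frob PT PP AP) _; rewrite trP.
  apply: le_trans (_ : r%:R * \sum_i \sum_j A i j ^+ 2 <= _).
    by apply: ler_wpM2r => //; rewrite ler_nat.
  by apply: ler_wpM2l => //; rewrite ler0n.
have s0 : 0 <= \sum_i a i by apply: sumr_ge0 => i _; exact: sqrtr_ge0.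
rewrite -[X in X <= _]ger0_norm // -sqrtr_sqr ler_sqrt //.
by apply: le_trans key; exact: sqr_ge0.
Qed.
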